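(* Let $\mathcal{H}=\bigotimes_{i=1}^m\mathcal{H}_i$ and let $S$ be an unextendible product basis of $\mathcal{H}$. Then $S$ is not completable even in a locally extended Hilbert space: for no choice of finite-dimensional spaces $\mathcal{H}_i'$ does there exist a set of pairwise orthogonal product states of $\mathcal{H}'=\bigotimes_{i=1}^m(\mathcal{H}_i\oplus\mathcal{H}_i')$, orthogonal to all elements of $S$, which together with $S$ forms an orthogonal basis of $\mathcal{H}'$.
   Context: A product state in a multipartite space $\bigotimes_i \mathcal{K}_i$ is a vector $\phi_1\otimes\cdots\otimes\phi_m$ with nonzero $\phi_i\in\mathcal{K}_i$. An (incomplete orthogonal) product basis is a set $S$ of pairwise orthogonal product states spanning a proper subspace $\mathcal{H}_S$ of $\mathcal{H}$; it is unextendible if $\mathcal{H}_S^\perp$ contains no product state. Elements of $\mathcal{H}$ are regarded as elements of $\mathcal{H}'$ via the natural inclusions $\mathcal{H}_i\subseteq\mathcal{H}_i\oplus\mathcal{H}_i'$. *)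

(* Defs.v *)
(* Complex scalars are modelled as R[i] (real_closed.complex)
   over an arbitrary R : realType, i.e. the complex numbers built on the reals. *)
From HB Require Import structures.
From mathcomp Require Import all_boot all_order all_algebra.
From mathcomp Require Import complex.
From mathcomp Require Import reals.
Set Implicit Arguments. Unset Strict Implicit. Unset Printing Implicit Defensive.
Import Order.TTheory GRing.Theory Num.Theory.
Local Open Scope ring_scope.

Section Multipartite.
Variable C : numClosedFieldType.
Variable m : nat.

(* Basis labels of H = (x)_{i<m} H_i with dim H_i = d i :
   a tuple (x_i)_i with x_i : 'I_(d i). *)
Definition idx (d : 'I_m -> nat) := {dffun forall i : 'I_m, 'I_(d i)}.

(* vectors of H, in coordinates w.r.t. the product of the standard bases *)
Definition vec (d : 'I_m -> nat) := {ffun idx d -> C}.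

Definition inner d (u v : vec d) : C := \sum_(x : idx d) (u x)^* * v x.

Definition orth d (u v : vec d) : Prop := inner u v = 0.

Definition product_state d (v : vec d) : Prop :=
  exists phi : forall i : 'I_m, 'I_(d i) -> C,
    (forall i, exists k, phi i k != 0) /\
    (forall x : idx d, v x = \prod_(i < m) phi i (x i)).

Definition in_span d (B : seq (vec d)) (v : vec d) : Prop :=
  exists c : nat -> C,
    forall x : idx d, v x = \sum_(k < size B) c k * (B`_k) x.

Definition pairwise_orth d (B : seq (vec d)) : Prop :=
  uniq B /\ forall j k : nat, (j < size B)%N -> (k < size B)%N -> j != k ->
    orth B`_j B`_k.

Definition product_basis d (S : seq (vec d)) : Prop :=
  pairwise_orth S /\ (forall s, s \in S -> product_state s) /\
  exists v : vec d, ~ in_span S v.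

Definition UPB d (S : seq (vec d)) : Prop :=
  product_basis S /\
  forall v : vec d, product_state v -> ~ (forall s, s \in S -> orth s v).

Definition orth_basis d (B : seq (vec d)) : Prop :=
  pairwise_orth B /\ (forall b, b \in B -> b != 0) /\
  forall v : vec d, in_span B v.

(* local extension: H_i  ⊆  H_i ⊕ H_i', dim H_i' = e i *)
Definition ext_dim (d e : 'I_m -> nat) : 'I_m -> nat := fun i => (d i + e i)%N.

(* natural inclusion (x)_i H_i  ->  (x)_i (H_i ⊕ H_i'),
   induced by the inclusions lshift : 'I_(d i) -> 'I_(d i + e i) *)
Definition embed (d e : 'I_m -> nat) (v : vec d) : vec (ext_dim d e) :=
  [ffun y : idx (ext_dim d e) =>
     \sum_(x : idx d | [forall i, lshift (e i) (x i) == y i]) v x].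

End Multipartite.

(* Main.v *)
Require Import Defs.
From HB Require Import structures.
From mathcomp Require Import all_boot all_order all_algebra.
From mathcomp Require Import complex.
From mathcomp Require Import reals.
Import Order.TTheory GRing.Theory Num.Theory.
Local Open Scope ring_scope.

Section X.
Variables (R : realType) (m : nat) (d e : 'I_m -> nat).

Definition liftx (x : idx d) : idx (ext_dim d e) :=
  finfun (fun i => lshift (e i) (x i)).

Lemma liftxE x i : liftx x i = lshift (e i) (x i). Proof. by rewrite ffunE. Qed.

Lemma cond_liftx (x x' : idx d) :
  [forall i, lshift (e i) (x' i) == liftx x i] = (x' == x).
Proof.
apply/forallP/eqP => [H|->] .
  apply/ffunP => i; have := H i; rewrite liftxE => /eqP; exact: lshift_inj.
by move=> i; rewrite liftxE.
Qed.

Lemma embed_liftx (v : vec R[i] d) x : embed e v (liftx x) = v x.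
Proof.
rewrite ffunE (eq_bigl (pred1 x)); first by rewrite big_pred1_eq.
by move=> x'; rewrite cond_liftx.
Qed.

Lemma inner_embed (s : vec R[i] d) (t : vec R[i] (ext_dim d e)) :
  inner (embed e s) t = inner s [ffun x => t (liftx x)].
Proof.
rewrite /inner.
under eq_bigr => y _ do rewrite ffunE rmorph_sum big_distrl /=.
under eq_bigr => y _ do rewrite big_mkcond.
rewrite exchange_big /=.
apply: eq_bigr => x _.
rewrite -big_mkcond /=.
rewrite ffunE (eq_bigl (pred1 (liftx x))); first by rewrite big_pred1_eq.
move=> y /=.
apply/forallP/eqP => [H|->].
  apply/ffunP => i; have := H i; rewrite liftxE => /eqP <-; done.
by move=> i; rewrite liftxE.
Qed.

End X.
Arguments liftx {m d} e x.
Arguments embed_liftx {R m d} e v x.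
Arguments inner_embed {R m d e} s t.

Theorem lemma2 (R : realType) (m : nat) (d : 'I_m -> nat)
    (S : seq (vec R[i] d)) :
  UPB S ->
  ~ exists (e : 'I_m -> nat) (T : seq (vec R[i] (ext_dim d e))),
      [/\ forall t, t \in T -> product_state t,
          pairwise_orth T,
          (forall t s, t \in T -> s \in S -> orth (embed e s) t) &
          orth_basis (map (embed e) S ++ T)].
Proof.
move=> [[_ [_ [v Hv]]] Hupb] [e [T [Tprod _ Torth [_ [_ Hspan]]]]].
have Tzero : forall t, t \in T -> forall x, t (liftx e x) = 0.
  move=> t tT x.
  have [phi [phinz phiE]] := Tprod t tT.
  case: (boolP [forall i, [exists k, phi i (lshift (e i) k) != 0]]) => [Hall|].
    exfalso; apply: (Hupb [ffun x => t (liftx e x)]).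
      exists (fun i k => phi i (lshift (e i) k)); split.
        by move=> i; have /existsP := forallP Hall i.
      move=> y; rewrite ffunE phiE; apply: eq_bigr => i _; by rewrite liftxE.
    move=> s sS; rewrite /orth -inner_embed; exact: Torth.
  move/forallPn => [i /existsPn Hi].
  rewrite phiE (bigD1 i) //= liftxE.
  by have /negPn/eqP -> := Hi (x i); rewrite mul0r.
apply: Hv.
have [c Hc] := Hspan (embed e v).
exists c => x.
rewrite -(embed_liftx e v x) Hc.
set B := (_ ++ _).
rewrite -(big_mkord (fun _ => true) (fun k => c k * B`_k (liftx e x))).
rewrite /B size_cat size_map.
rewrite (@big_cat_nat _ _ _ (size S)) ?leq_addr //=.
rewrite [X in _ + X](_ : _ = 0) ?addr0; last first.
  rewrite big_nat_cond big1 // =>  k /andP [/andP [Hk1 Hk2] _].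
  rewrite nth_cat size_map ltnNge Hk1 /= Tzero ?mulr0 //.
  apply: mem_nth; rewrite -(ltn_add2l (size S)) subnKC //.
rewrite big_mkord; apply: eq_bigr => k _.
by rewrite nth_cat size_map ltn_ord (nth_map 0) // embed_liftx.
Qed.
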